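(* Let $\mathbf{B}$ be a 2-element algebra with universe $\{0,1\}$ such that at least one of the following holds: (1) $\mathbf{B}\preceq\boldsymbol{\bigwedge}$, (2) $\mathbf{B}\preceq\boldsymbol{\bigvee}$, or (3) $\mathbf{B}\preceq\mathsf{A}$. Let $\mathbf{A}=\mathbf{B}^n$. Then any classical algorithm which solves $\mathrm{HKP}(\mathbf{A})$ must make $\Omega(2^{n/2})$ queries to the oracle.
   Context: $\mathrm{Clo}(\mathbf{B})$ is the clone of term operations of $\mathbf{B}$ (smallest set of operations on $\{0,1\}$ containing the basic operations and projections, closed under composition). For a clone $\mathcal{C}$ on $\{0,1\}$, $\mathbf{B}\preceq\mathcal{C}$ means $\mathrm{Clo}(\mathbf{B})\subseteq\mathcal{C}$. $\boldsymbol{\bigwedge}$ is the clone generated by $x\wedge y$ and the constants $0,1$; $\boldsymbol{\bigvee}$ is the clone generated by $x\vee y$ and the constants $0,1$; $\mathsf{A}$ is the clone generated by $x\leftrightarrow y$ (the operation equal to $1$ iff $x=y$) and the constant $0$. $\mathbf{B}^n$ is the direct power with coordinatewise operations. A congruence is an equivalence relation compatible with all operations; $\ker(\phi)=\{(a,b):\phi(a)=\phi(b)\}$. The Hidden Kernel Problem $\mathrm{HKP}(\mathbf{A})$: given a similar algebra $\mathbf{C}$ and a homomorphism $\phi:\mathbf{A}\to\mathbf{C}$ accessible only as an oracle, determine the congruence $\ker(\phi)$. *)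

(* Defs.v *)
From mathcomp Require Import all_boot.
Set Implicit Arguments. Unset Strict Implicit. Unset Printing Implicit Defensive.

Structure signature := Sig { sym : Type ; arity : sym -> nat }.

Definition ops (s : signature) (T : Type) :=
  forall i : sym s, ('I_(arity i) -> T) -> T.

Definition pow_ops (s : signature) (n : nat) (opB : ops s bool)
  : ops s {ffun 'I_n -> bool} :=
  fun i args => [ffun j => opB i (fun k => args k j)].

Definition is_hom (s : signature) (TA TC : Type) (opA : ops s TA)
  (opC : ops s TC) (f : TA -> TC) : Prop :=
  forall (i : sym s) (args : 'I_(arity i) -> TA),
    f (opA i args) = opC i (fun k => f (args k)).

Inductive term (s : signature) (k : nat) : Type :=
| Var of 'I_k
| App (i : sym s) of ('I_(arity i) -> term s k).

Fixpoint eval (s : signature) (T : Type) (op : ops s T) (k : nat)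
  (x : 'I_k -> T) (t : term s k) : T :=
  match t with
  | Var j => x j
  | App i ts => op i (fun l => eval op x (ts l))
  end.

(** [in_clo op k f]: the k-ary operation f on {0,1} belongs to Clo(op), the
    clone generated by the basic operations op (= term operations). *)
Definition in_clo (s : signature) (op : ops s bool) (k : nat)
  (f : ('I_k -> bool) -> bool) : Prop :=
  exists t : term s k, forall x, eval op x t = f x.

Definition clone_le (s s' : signature) (opB : ops s bool) (opG : ops s' bool)
  : Prop :=
  forall (k : nat) (f : ('I_k -> bool) -> bool), in_clo opB f -> in_clo opG f.

(** Generators of the clone /\ : x /\ y and the constants 0, 1. *)
Inductive meet_sym := MAnd | MZero | MOne.
Definition meet_ar (i : meet_sym) : nat :=
  match i with MAnd => 2 | _ => 0 end.
Definition meet_sig := Sig meet_ar.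
Definition meet_ops : ops meet_sig bool :=
  fun i => match i return ('I_(meet_ar i) -> bool) -> bool with
  | MAnd => fun a => a ord0 && a ord_max
  | MZero => fun _ => false
  | MOne => fun _ => true
  end.

(** Generators of the clone \/ : x \/ y and the constants 0, 1. *)
Inductive join_sym := JOr | JZero | JOne.
Definition join_ar (i : join_sym) : nat :=
  match i with JOr => 2 | _ => 0 end.
Definition join_sig := Sig join_ar.
Definition join_ops : ops join_sig bool :=
  fun i => match i return ('I_(join_ar i) -> bool) -> bool with
  | JOr => fun a => a ord0 || a ord_max
  | JZero => fun _ => false
  | JOne => fun _ => true
  end.

(** Generators of the clone A : x <-> y (1 iff x = y) and the constant 0. *)
Inductive aff_sym := AIff | AZero.
Definition aff_ar (i : aff_sym) : nat :=
  match i with AIff => 2 | AZero => 0 end.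
Definition aff_sig := Sig aff_ar.
Definition aff_ops : ops aff_sig bool :=
  fun i => match i return ('I_(aff_ar i) -> bool) -> bool with
  | AIff => fun a => a ord0 == a ord_max
  | AZero => fun _ => false
  end.

(** The history
    after t queries is the sequence of pairs (a_j, r_j) where a_j is the j-th
    query and r_j is the oracle's answer, recorded as the index of the first
    query a_l (l <= j) with phi a_l = phi a_j (the answers are opaque labels
    of elements of C; only their equality pattern is observable). *)
Record det_alg (A : Type) := DetAlg {
  step : seq (A * nat) -> A;
  output : seq (A * nat) -> A -> A -> bool
}.

Fixpoint history (A : Type) (TC : eqType) (alg : det_alg A) (phi : A -> TC)
  (q : nat) : seq (A * nat) :=
  match q with
  | 0 => [::]
  | q'.+1 =>
      let h := history alg phi q' in
      let a := step alg h in
      rcons h (a, find (fun b => phi b == phi a) (rcons (map fst h) a))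
  end.

Definition correct (A : finType) (TC : eqType) (alg : det_alg A) (q : nat)
  (phi : A -> TC) : bool :=
  [forall a : A, forall b : A,
     output alg (history alg phi q) a b == (phi a == phi b)].

(** A randomized algorithm with random seed drawn uniformly from the nonempty
    finite type S, making q queries, solves HKP(A) (A with operations opA)
    with success probability >= 2/3 on every instance (C, phi). *)
Definition solves_HKP (s : signature) (TA : finType) (opA : ops s TA)
  (S : finType) (alg : S -> det_alg TA) (q : nat) : Prop :=
  0 < #|S| /\
  forall (TC : eqType) (opC : ops s TC) (phi : TA -> TC),
    is_hom opA opC phi ->
    2 * #|S| <= 3 * #|[pred r : S | correct (alg r) q phi]|.

(* Main.v *)
Require Import Defs.
From mathcomp Require Import all_boot.
From Stdlib Require Import FunctionalExtensionality.
Set Implicit Arguments. Unset Strict Implicit. Unset Printing Implicit Defensive.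

Definition equivr (T : Type) (E : rel T) :=
  [/\ forall x, E x x, forall x y, E x y -> E y x
    & forall x y z, E x y -> E y z -> E x z].

Definition compat (s : signature) (T : Type) (op : ops s T) (E : rel T) :=
  forall i (a a' : 'I_(arity i) -> T), (forall k, E (a k) (a' k)) ->
    E (op i a) (op i a').

Definition rep (T : finType) (E : rel T) (x : T) : T := odflt x [pick y | E x y].

Lemma rep_spec (T : finType) (E : rel T) x : equivr E -> E x (rep E x).
Proof.
case=> Er Es Et; rewrite /rep; case: pickP => [y //|H]; by rewrite /= Er.
Qed.

Lemma rep_eq (T : finType) (E : rel T) x y : equivr E ->
  (rep E x == rep E y) = E x y.
Proof.
move=> HE; have [Er Es Et] := HE.
apply/idP/idP => [/eqP H|H].
  apply: (Et _ (rep E x)); first exact: rep_spec.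
  rewrite H; apply: Es; exact: rep_spec.
rewrite /rep (@eq_pick _ (fun z => E x z) (fun z => E y z)) //.
  case: pickP => [z|] //= Hn; move: (Hn y); rewrite /= Er //.
move=> z; apply/idP/idP => Hz; [apply: Et (Es _ _ H) Hz | apply: Et H Hz].
Qed.

Lemma rep_hom (s : signature) (T : finType) (op : ops s T) (E : rel T) :
  equivr E -> compat op E ->
  is_hom op (fun i a => rep E (op i a)) (rep E).
Proof.
move=> HE Hc i a; apply/eqP; rewrite rep_eq //; apply: Hc => k.
exact: rep_spec.
Qed.

Lemma size_history (A : Type) (TC : eqType) (alg : det_alg A) (phi : A -> TC) q :
  size (history alg phi q) = q.
Proof. by elim: q => //= q IH; rewrite size_rcons IH. Qed.

Lemma hist_eq (A : eqType) (TC1 TC2 : eqType) (alg : det_alg A)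
  (phi1 : A -> TC1) (phi2 : A -> TC2) q :
  (forall x y, x \in map fst (history alg phi1 q) ->
                y \in map fst (history alg phi1 q) ->
                (phi1 x == phi1 y) = (phi2 x == phi2 y)) ->
  history alg phi1 q = history alg phi2 q.
Proof.
elim: q => //= q IH H.
have H' : forall x y, x \in map fst (history alg phi1 q) ->
                y \in map fst (history alg phi1 q) ->
                (phi1 x == phi1 y) = (phi2 x == phi2 y).
  move=> x y Hx Hy; apply: H; rewrite map_rcons mem_rcons inE ?Hx ?Hy orbT //.
rewrite -(IH H'); congr rcons; congr pair.
apply: eq_in_find => b Hb /=; apply: H.
  by rewrite map_rcons; exact: Hb.
by rewrite map_rcons mem_rcons inE eqxx.
Qed.

Definition V (s : signature) (opG : ops s bool) n k (t : term s k)
  (a : 'I_k -> {ffun 'I_n -> bool}) : {ffun 'I_n -> bool} :=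
  [ffun j => eval opG (fun l => a l j) t].

Lemma V_compat (s : signature) (opG : ops s bool) n (E : rel {ffun 'I_n -> bool}) k
  (t : term s k) : compat (pow_ops opG) E ->
  forall a a', (forall l, E (a l) (a' l)) -> E (V opG t a) (V opG t a').
Proof.
move=> Hc; elim: t => [j|i ts IH] a a' Ha.
  have HV : forall b : _ -> {ffun 'I_n -> bool}, V opG (Var s j) b = b j.
    by move=> b; apply/ffunP => x; rewrite ffunE.
  by rewrite !HV.
have HV : forall b : _ -> {ffun 'I_n -> bool}, V opG (App ts) b = pow_ops opG (fun l => V opG (ts l) b).
  move=> b; apply/ffunP => x; rewrite !ffunE /=; congr (opG i).
  by apply: functional_extensionality => l; rewrite ffunE.
rewrite !HV; apply: Hc => l; exact: IH.
Qed.

Lemma clone_compat (s s' : signature) (opB : ops s bool) (opG : ops s' bool) n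
  (E : rel {ffun 'I_n -> bool}) :
  clone_le opB opG -> compat (pow_ops opG) E -> compat (pow_ops opB) E.
Proof.
move=> Hle Hc i a a' Ha.
have [t Ht] : in_clo opG (opB i).
  apply: Hle; exists (App (fun l => Var s l)) => x //.
have HV : forall b : _ -> {ffun 'I_n -> bool}, pow_ops opB (i:=i) b = V opG t b.
  by move=> b; apply/ffunP => j; rewrite !ffunE Ht.
rewrite !HV; exact: V_compat.
Qed.

Lemma hkp_lower (s : signature) (TA : finType) (opA : ops s TA) (S : finType)
  (alg : S -> det_alg TA) (q : nat) (I : finType) (A : {set I})
  (E : I -> rel TA) (E0 : rel TA) (bad : I -> TA -> TA -> bool) (M : nat) :
  solves_HKP opA alg q ->
  (forall i, i \in A -> equivr (E i) /\ compat opA (E i)) ->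
  equivr E0 ->
  (forall i x y, i \in A -> ~~ bad i x y -> E i x y = E0 x y) ->
  {in A &, forall i j, (forall x y, E i x y = E j x y) -> i = j} ->
  (forall Q : seq TA, size Q = q ->
     #|[set i in A | has (fun x => has (bad i x) Q) Q]| <= M) ->
  2 * #|A| <= 3 * M.+1.
Proof.
move=> [S0 Hsol] HA HE0 Hbad Hinj HM.
pose P r i := correct (alg r) q (rep (E i)).
have C1 : forall r, #|[set i in A | P r i]| <= M.+1.
  move=> r; pose h0 := history (alg r) (rep E0) q.
  pose Q := map fst h0.
  pose Bd := [set i in A | has (fun x => has (bad i x) Q) Q].
  pose G := [set i in A | ~~ has (fun x => has (bad i x) Q) Q & P r i].
  have HB : #|Bd| <= M by apply: HM; rewrite size_map size_history.
  have HG : #|G| <= 1.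
    have key : forall i, i \in G -> forall a b, E i a b = output (alg r) h0 a b.
      move=> i; rewrite inE => /and3P [iA nb Pi] a b.
      have [Ei _] := HA i iA.
      have Hh : h0 = history (alg r) (rep (E i)) q.
        apply: hist_eq => x y Hx Hy; rewrite !rep_eq // Hbad //.
        apply/negP => Hb; move/negP: nb; apply; apply/hasP; exists x => //.
        by apply/hasP; exists y.
      move: Pi; rewrite /P /correct => /forallP /(_ a) /forallP /(_ b) /eqP.
      by rewrite -Hh rep_eq.
    have GA : forall i, i \in G -> i \in A by move=> i; rewrite inE => /andP [].
    apply/card_le1_eqP => i j Hi Hj.
    apply: Hinj; try exact: GA Hi; try exact: GA Hj.
    by move=> x y; rewrite !key.
  apply: leq_trans (_ : #|Bd :|: G| <= _).
    apply: subset_leq_card; apply/subsetP => i; rewrite !inE.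
    by case: (i \in A) => //=; case: has.
  rewrite cardsU; apply: leq_trans (leq_subr _ _) _.
  by rewrite -addn1 leq_add.
have C2 : forall i, i \in A -> 2 * #|S| <= 3 * #|[set r | P r i]|.
  move=> i iA; have [Ei Ci] := HA i iA.
  have := Hsol TA (fun j a => rep (E i) (opA j a)) (rep (E i)) (rep_hom Ei Ci).
  move=> H; apply: leq_trans H _; rewrite leq_mul2l /=; apply: subset_leq_card.
  by apply/subsetP => r; rewrite !inE.
have Hsum : \sum_(i in A) #|[set r | P r i]| = \sum_r #|[set i in A | P r i]|.
  transitivity (\sum_(i in A) \sum_(r | P r i) 1).
    by apply: eq_bigr => i _; rewrite -sum1_card; apply: eq_bigl => r; rewrite inE.
  rewrite (exchange_big_dep predT) //=; apply: eq_bigr => r _.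
  by rewrite -sum1_card; apply: eq_bigl => i; rewrite inE.
have H1 : \sum_(i in A) (2 * #|S|) <= \sum_(i in A) 3 * #|[set r | P r i]|.
  by apply: leq_sum => i iA; apply: C2.
rewrite sum_nat_const -big_distrr /= Hsum in H1.
have H2 : \sum_r #|[set i in A | P r i]| <= \sum_(r : S) M.+1.
  by apply: leq_sum => r _; apply: C1.
rewrite sum_nat_const in H2.
move: H1 H2 S0; rewrite -/#|S|.
move: (\sum_r _) => X; move: #|S| #|A| => a b H1 H2 H0.
rewrite -(leq_pmul2l H0); apply: leq_trans (_ : a * (2 * b) <= 3 * X) _.
  by move: H1; rewrite !mulnA (mulnC b 2) (mulnC a 2) -!mulnA (mulnC a b).
by rewrite mulnCA leq_mul2l H2 orbT.
Qed.

Section Aff.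
Variable n : nat.
Local Notation vec := {ffun 'I_n -> bool}.

Definition xorv (x y : vec) : vec := [ffun j => x j (+) y j].
Definition Ea (s : vec) : rel vec := fun x y => (x == y) || (x == xorv y s).

Lemma xorvK y s : xorv (xorv y s) s = y.
Proof. by apply/ffunP => j; rewrite !ffunE addbK. Qed.

Lemma Ea_equiv s : equivr (Ea s).
Proof.
split=> [x|x y|x y z]; rewrite /Ea ?eqxx //.
  by case/orP => /eqP ->; rewrite ?eqxx // xorvK eqxx orbT.
case/orP => /eqP -> /orP [] /eqP ->; rewrite ?eqxx ?orbT //.
by rewrite xorvK eqxx.
Qed.

Lemma Ea_compat s : compat (pow_ops aff_ops) (Ea s).
Proof.
have [Er Es Et] := Ea_equiv s.
have L : forall x y z, Ea s x y ->
   Ea s [ffun j => x j == z j] [ffun j => y j == z j] /\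
   Ea s [ffun j => z j == x j] [ffun j => z j == y j].
  move=> x y z; case/orP => /eqP ->; first by split; apply: Er.
  split; apply/orP; right; apply/eqP/ffunP => j; rewrite !ffunE;
    by case: (y j); case: (z j); case: (s j).
move=> [] a a' Ha /=; last exact: Er.
apply: (Et _ [ffun j => a' ord0 j == a ord_max j]).
  exact: (L _ _ _ (Ha ord0)).1.
exact: (L _ _ _ (Ha ord_max)).2.
Qed.

Lemma Ea_inj s t : (forall x y, Ea s x y = Ea t x y) -> s = t.
Proof.
have E0 : forall u, xorv [ffun => false] u = u.
  by move=> u; apply/ffunP => j; rewrite !ffunE.
move=> H.
have H1 : Ea t s [ffun => false].
  by rewrite -H /Ea E0; apply/orP; right.
have H2 : Ea s t [ffun => false].
  by rewrite H /Ea E0; apply/orP; right.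
rewrite /Ea E0 in H1 H2.
case/orP: H1 => /eqP // Hs.
case/orP: H2 => /eqP Ht; [by rewrite Hs Ht | by rewrite Ht].
Qed.

End Aff.

Lemma aff_bad n (Q : seq {ffun 'I_n -> bool}) :
  #|[set s in setT | has (fun x => has (fun y => x == xorv y s) Q) Q]| <= size Q * size Q.
Proof.
rewrite -(size_allpairs (@xorv n)); apply: leq_trans (card_size _).
apply: subset_leq_card; apply/subsetP => s; rewrite !inE /=.
case/hasP => x xQ /hasP [y yQ /eqP Hx]; apply/allpairsP; exists (x, y) => /=.
split=> //; apply/ffunP => j; by rewrite Hx !ffunE addbC addbA addbb.
Qed.

Section Mono.
Variable n : nat.
Local Notation vec := {ffun 'I_n -> bool}.
Variable b : bool.
Definition supp (x : vec) := [set j | x j == b].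
Definition wt (x : vec) := #|supp x|.

Lemma supp_inj x y : supp x = supp y -> x = y.
Proof.
move/setP => H; apply/ffunP => j; move: (H j); rewrite !inE.
by case: (x j); case: (y j); case: b.
Qed.

Variable k : nat.
Definition inD (g x : vec) := (x == g) || (wt x < k).
Definition Em (g : vec) : rel vec := fun x y => (x == y) || (inD g x && inD g y).
Definition E0m : rel vec := fun x y => (x == y) || ((wt x < k) && (wt y < k)).

Lemma Em_equiv g : equivr (Em g).
Proof.
split=> [x|x y|x y z]; rewrite /Em ?eqxx //.
  by rewrite eq_sym andbC.
case/orP => [/eqP -> //|/andP [Hx Hy]].
by case/orP => [/eqP <-|/andP [_ Hz]]; rewrite ?Hx ?Hy ?Hz orbT.
Qed.

Lemma E0m_equiv : equivr E0m.
Proof.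
split=> [x|x y|x y z]; rewrite /E0m ?eqxx //.
  by rewrite eq_sym andbC.
case/orP => [/eqP -> //|/andP [Hx Hy]].
by case/orP => [/eqP <-|/andP [_ Hz]]; rewrite ?Hx ?Hy ?Hz orbT.
Qed.


Lemma supp_d : supp [ffun => ~~ b] = set0.
Proof. by apply/setP => j; rewrite !inE ffunE; case: b. Qed.

Lemma Em_inj g h : wt g = k -> wt h = k -> (forall x y, Em g x y = Em h x y) -> g = h.
Proof.
move=> Hg Hh H.
case: (posnP k) => [k0|kp].
  have Z : forall u, wt u = k -> u = [ffun => ~~ b].
    move=> u Hu; apply: supp_inj; rewrite supp_d; apply/eqP; rewrite -cards_eq0.
    by rewrite -/(wt u) Hu k0.
  by rewrite (Z g Hg) (Z h Hh).
have Hd : wt [ffun => ~~ b] < k by rewrite /wt supp_d cards0.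
have := H g [ffun => ~~ b]; rewrite /Em /inD eqxx Hd /= !orbT.
have -> : (g == [ffun => ~~ b]) = false.
  apply/negP => /eqP E; move: Hd; by rewrite -E Hg ltnn.
by rewrite /= andbT Hg ltnn orbF => /esym/eqP.
Qed.

Lemma Em_nonbad g x y : ~~ ((x == g) || (y == g)) -> Em g x y = E0m x y.
Proof. by rewrite negb_or /Em /E0m /inD => /andP [/negbTE -> /negbTE ->]. Qed.

Lemma wt_le x : wt x <= n.
Proof. by apply: leq_trans (max_card _) _; rewrite card_ord. Qed.


Variable f : vec -> vec -> vec.
Hypothesis f_sub : forall x z, supp (f x z) \subset supp x.
Hypothesis f_comm : forall x z, f x z = f z x.

Lemma inD_f g x z : wt g = k -> inD g x -> inD g (f x z).
Proof.
move=> Hg; case/orP => [/eqP ->|Hx].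
  have Hs := f_sub g z.
  case: (boolP (supp g \subset supp (f g z))) => H.
    have E : supp (f g z) = supp g by apply/eqP; rewrite eqEsubset Hs H.
    by rewrite /inD (supp_inj E) eqxx.
  apply/orP; right; rewrite -Hg; apply: proper_card; by rewrite properE Hs H.
apply/orP; right; apply: leq_ltn_trans Hx; exact: subset_leq_card.
Qed.

Lemma Em_f g x y z : wt g = k -> Em g x y -> Em g (f x z) (f y z).
Proof.
move=> Hg; case/orP => [/eqP -> |/andP [Hx Hy]]; first by have [Er _ _] := Em_equiv g; apply: Er.
by apply/orP; right; rewrite !inD_f.
Qed.

Lemma Em_f2 g x x' y y' : wt g = k -> Em g x x' -> Em g y y' -> Em g (f x y) (f x' y').
Proof.
move=> Hg H1 H2; have [_ _ Et] := Em_equiv g.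
apply: (Et _ (f x' y)); first exact: Em_f.
rewrite (f_comm x') (f_comm x'); exact: Em_f.
Qed.

End Mono.

Lemma Em_meet_compat n k g : wt true g = k -> compat (pow_ops (n:=n) meet_ops) (Em true k g).
Proof.
move=> Hg i a a' Ha; have [Er _ _] := @Em_equiv n true k g.
case: i a a' Ha => a a' Ha.
  apply: (@Em_f2 n true k (fun x z => [ffun j => x j && z j])) => //.
  - by move=> x z; apply/subsetP => j; rewrite !inE ffunE; case: (x j).
  - by move=> x z; apply/ffunP => j; rewrite !ffunE andbC.
all: suff -> : pow_ops meet_ops a = pow_ops meet_ops a' by apply: Er.
all: by apply/ffunP => j; rewrite !ffunE.
Qed.

Lemma Em_join_compat n k g : wt false g = k -> compat (pow_ops (n:=n) join_ops) (Em false k g).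
Proof.
move=> Hg i a a' Ha; have [Er _ _] := @Em_equiv n false k g.
case: i a a' Ha => a a' Ha.
  apply: (@Em_f2 n false k (fun x z => [ffun j => x j || z j])) => //.
  - by move=> x z; apply/subsetP => j; rewrite !inE ffunE; case: (x j).
  - by move=> x z; apply/ffunP => j; rewrite !ffunE orbC.
all: suff -> : pow_ops join_ops a = pow_ops join_ops a' by apply: Er.
all: by apply/ffunP => j; rewrite !ffunE.
Qed.

Lemma mono_bad n b k (Q : seq {ffun 'I_n -> bool}) :
  #|[set g in [set g | wt b g == k] | has (fun x => has (fun y => (x == g) || (y == g)) Q) Q]| <= size Q.
Proof.
apply: leq_trans (card_size Q); apply: subset_leq_card; apply/subsetP => g.
rewrite !inE => /andP [_ /hasP [x xQ /hasP [y yQ /orP [] /eqP <-]]] //.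
Qed.

Lemma pigeon n b : exists k, 2 ^ n <= n.+1 * #|[set g : {ffun 'I_n -> bool} | wt b g == k]|.
Proof.
case: (boolP [exists k : 'I_n.+1, 2 ^ n <= n.+1 * #|[set g : {ffun 'I_n -> bool} | wt b g == k]|]).
  by case/existsP => k Hk; exists (nat_of_ord k).
rewrite negb_exists => /forallP H; exfalso.
have Hc : #|{ffun 'I_n -> bool}| = \sum_(k < n.+1) #|[set g : {ffun 'I_n -> bool} | wt b g == k]|.
  rewrite -sum1_card (partition_big (fun g => (inord (wt b g) : 'I_n.+1)) predT) //=.
  apply: eq_bigr => k _; rewrite -sum1_card; apply: eq_bigl => g; rewrite !inE.
  apply/eqP/eqP => [H1|H1]; first by rewrite -H1 inordK // ltnS wt_le.
  by rewrite H1 inord_val.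
rewrite card_ffun card_bool card_ord in Hc.
have : n.+1 * 2 ^ n <= n.+1 * (2 ^ n).-1.
  rewrite {1}Hc big_distrr /=.
  apply: leq_trans (_ : _ <= \sum_(i < n.+1) (2 ^ n).-1) _; last by rewrite sum_nat_const card_ord.
  apply: leq_sum => k _.
  have Hk := H k; rewrite -ltnS prednK ?expn_gt0 // ltnNge; exact: Hk.
rewrite leq_mul2l /= -ltnS prednK ?expn_gt0 //= ltnn //.
Qed.
From mathcomp Require Import zify.

Lemma pow_big n : 11 <= n -> 9 * n.+1 ^ 2 <= 2 ^ n.
Proof.
move=> H; rewrite -(subnKC H); elim: (n - 11) => [|m IH]; first by [].
rewrite addnS expnS.
have : 9 * (11 + m).+2 ^ 2 <= 2 * (9 * (11 + m).+1 ^ 2) by rewrite !expnS !expn0; nia.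
move=> H2; apply: leq_trans H2 _; by rewrite leq_mul2l IH.
Qed.

Lemma arith_aff n q : 11 <= n -> 2 * 2^n <= 3 * (q*q).+1 -> 2^n <= 3 * q^2.
Proof.
move=> Hn H; have := @pow_big n Hn; move: H; move: (2 ^ n) => X H1 H2.
rewrite expnS expn1; nia.
Qed.

Lemma arith_mono n q a : 11 <= n -> 2^n <= n.+1 * a -> 2 * a <= 3 * q.+1 -> 2^n <= 3 * q^2.
Proof.
move=> Hn H1 H2; have := @pow_big n Hn; move: H1 H2; move: (2 ^ n) => X H1 H2 H3.
rewrite expnS expn1 in H3 *.
have H4 : 2 * X <= 3 * n.+1 * q.+1.
  apply: leq_trans (_ : n.+1 * (2 * a) <= _); first by nia.
  by nia.
case: q H2 H4 => [|q] H2 H4; first by nia.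
have H5 : X <= 3 * n.+1 * q.+1 by nia.
have H6 : X * X <= 9 * (n.+1 * n.+1) * (q.+1 * q.+1) by nia.
have H7 : X * X <= X * (q.+1 * q.+1) by nia.
have H8 : 0 < X by nia.
rewrite leq_pmul2l // in H7; nia.
Qed.

Theorem theorem5p1 (s : signature) (opB : ops s bool) :
  clone_le opB meet_ops \/ clone_le opB join_ops \/ clone_le opB aff_ops ->
  exists c N : nat, forall n : nat, N <= n ->
    forall (S : finType) (alg : S -> det_alg {ffun 'I_n -> bool}) (q : nat),
      solves_HKP (pow_ops (n:=n) opB) alg q ->
      2 ^ n <= c * q ^ 2.
Proof.
move=> H; exists 3, 11 => n Hn S alg q Hsol.
have mono : forall (b : bool),
    (forall k g, wt b g = k -> compat (pow_ops (n:=n) opB) (@Em n b k g)) ->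
    2 ^ n <= 3 * q ^ 2.
  move=> b Hc; have [k Hk] := pigeon n b.
  have := @hkp_lower s _ (pow_ops (n:=n) opB) S alg q _ [set g | wt b g == k]
     (@Em n b k) (@E0m n b k) (fun g x y => (x == g) || (y == g)) q Hsol.
  move=> /(_ _ _ _ _ _) L; apply: (arith_mono Hn Hk); apply: L.
  - move=> i; rewrite inE => /eqP Hi; split; [exact: Em_equiv | exact: Hc].
  - exact: E0m_equiv.
  - move=> i x y _; exact: Em_nonbad.
  - move=> i j; rewrite !inE => /eqP Hi /eqP Hj; exact: Em_inj.
  - move=> Q HQ; rewrite -HQ; exact: mono_bad.
case: H => [Hm|[Hj|Ha]].
- apply: (mono true) => k g Hg; exact: clone_compat Hm (Em_meet_compat Hg).
- apply: (mono false) => k g Hg; exact: clone_compat Hj (Em_join_compat Hg).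
have := @hkp_lower s _ (pow_ops (n:=n) opB) S alg q _ [set: {ffun 'I_n -> bool}]
   (@Ea n) (fun x y => x == y) (fun s0 x y => x == xorv y s0) (q * q) Hsol.
move=> /(_ _ _ _ _ _) L; apply: (arith_aff Hn).
suff: 2 * #|[set: {ffun 'I_n -> bool}]| <= 3 * (q * q).+1.
  by rewrite cardsT card_ffun card_bool card_ord.
apply: L.
- move=> i _; split; first exact: Ea_equiv.
  apply: (clone_compat Ha); exact: Ea_compat.
- by split=> [x|x y|x y z] //; [rewrite eq_sym | move=> /eqP ->].
- by move=> i x y _ Hb; rewrite /Ea (negbTE Hb) orbF.
- move=> i j _ _; exact: Ea_inj.
- move=> Q HQ; rewrite -HQ; exact: aff_bad.
Qed.
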